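(* Let $K\ge2$, $p\in(0,1)$, and let $\sigma:[K]\to[K]$ be a bijection different from the identity. Then there exists $m\in[K-1]$ such that $d_S(\sigma)\ge d_S(\hat\sigma_m)$ for all $S\in\mathcal S$.
   Context: Items are $[K]=\{1,\dots,K\}$, $\mathcal S=\{S\subseteq[K]:|S|\ge2\}$. A ranking is a bijection $\sigma:[K]\to[K]$, $\sigma(i)=k$ meaning item $i$ is in position $k$. For $S\in\mathcal S$, $i\in S$, let $\sigma(i\mid S)=1+|\{j\in S:\sigma(j)<\sigma(i)\}|$ and $f^{\mathrm{OA}}_\sigma(i\mid S)=\frac{1-p}{1-p^{|S|}}p^{\sigma(i\mid S)-1}$. Define $d_S(\sigma)=\sum_{i\in S}f^{\mathrm{OA}}_{\mathrm{id}}(i\mid S)\log\frac{f^{\mathrm{OA}}_{\mathrm{id}}(i\mid S)}{f^{\mathrm{OA}}_\sigma(i\mid S)}$, with $\mathrm{id}$ the identity ranking. For $m\in[K-1]$, $\hat\sigma_m$ is the ranking obtained from the identity by swapping the positions of items $m$ and $m+1$: $\hat\sigma_m(m)=m+1$, $\hat\sigma_m(m+1)=m$, $\hat\sigma_m(j)=j$ otherwise. *)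

(* Defs.v *)
From mathcomp Require Import all_boot all_order all_algebra all_fingroup.
From mathcomp Require Import all_classical all_reals all_analysis.
Set Implicit Arguments. Unset Strict Implicit. Unset Printing Implicit Defensive.
Import Order.TTheory GRing.Theory Num.Theory.
Local Open Scope ring_scope.

(* Items [K] = {1..K} are represented by 'I_K = {0..K-1} (shift by one);
   a ranking sigma is a permutation of 'I_K, sigma i = position of item i
   (also shifted by one).  Only relative order of positions matters. *)

Definition relpos (K : nat) (sigma : {perm 'I_K}) (S : {set 'I_K}) (i : 'I_K) : nat :=
  (#|[set j in S | (sigma j < sigma i)%N]|).+1.

Definition fOA (R : realType) (p : R) (K : nat) (sigma : {perm 'I_K})
  (S : {set 'I_K}) (i : 'I_K) : R :=
  (1 - p) / (1 - p ^+ #|S|) * p ^+ (relpos sigma S i).-1.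

Definition dS (R : realType) (p : R) (K : nat) (S : {set 'I_K})
  (sigma : {perm 'I_K}) : R :=
  \sum_(i in S) fOA p 1%g S i * ln (fOA p 1%g S i / fOA p sigma S i).

(* hat sigma_m : the identity with the positions of items m and m+1 swapped,
   i.e. the transposition of items m and m+1 (0-indexed: m, m+1 < K). *)
Definition swapAdj (K : nat) (m : nat) : {perm 'I_K} :=
  match ltnP m.+1 K with
  | LtnNotGeq h => tperm (Ordinal (ltnW h)) (Ordinal h)
  | _ => 1%g
  end.

(* Main.v *)
Require Import Defs.
From mathcomp Require Import all_boot all_order all_algebra all_fingroup.
From mathcomp Require Import all_classical all_reals all_analysis.
Import Order.TTheory GRing.Theory Num.Theory.
From mathcomp Require Import ring zify.
From Stdlib Require Classical_Prop.
Local Open Scope ring_scope.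

Lemma cardR (R : realType) (T : finType) (S : {set T}) (P : pred T) :
  (#|[set j in S | P j]|)%:R = \sum_(j in S) (if P j then 1 else 0 : R).
Proof.
rewrite -sum1_card natr_sum.
rewrite (eq_bigl (fun j => (j \in S) && P j)); last by move=> j; rewrite !inE.
by rewrite big_mkcondr.
Qed.

Lemma relpos1 K (S : {set 'I_K}) (i : 'I_K) :
  relpos 1%g S i = (#|[set j in S | (j < i)%N]|).+1.
Proof. by rewrite /relpos; congr _.+1; apply: eq_card => j; rewrite !inE !perm1. Qed.

Lemma alg (R : comNzRingType) (c l : R) (a b : nat) :
  c * (l *+ a - l *+ b) = - l * (c * (b%:R - a%:R)).
Proof. ring. Qed.

Section Core.
Variables (R : realType) (K : nat) (p : R) (S : {set 'I_K}).
Hypothesis (p0 : 0 < p) (p1 : p < 1) (S2 : (2 <= #|S|)%N).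

Definition C : R := (1 - p) / (1 - p ^+ #|S|).

Lemma C_gt0 : 0 < C.
Proof.
rewrite /C divr_gt0 // ?subr_gt0 // exprn_ilt1 ?ltW //.
by rewrite -lt0n; apply: leq_trans S2.
Qed.

Definition w (i : 'I_K) : R := fOA p 1%g S i.

Lemma w_ge0 i : 0 <= w i.
Proof. by apply: mulr_ge0; [exact: ltW C_gt0|exact: exprn_ge0 (ltW p0)]. Qed.

Lemma w_mono (i j : 'I_K) : (i < j)%N -> w j <= w i.
Proof.
move=> ij; rewrite /w /fOA !relpos1 /=.
apply: ler_wpM2l; first exact: ltW C_gt0.
apply: ler_wiXn2l; rewrite ?(ltW p0) ?(ltW p1) //.
apply: subset_leq_card; apply/fintype.subsetP => k; rewrite !inE => /andP[-> kl] /=.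
exact: ltn_trans kl ij.
Qed.

Definition pairsum (sigma : {perm 'I_K}) : R :=
  \sum_(i in S) \sum_(j in S)
     (if (i < j)%N && (sigma j < sigma i)%N then w i - w j else 0).

Lemma pt (sigma : {perm 'I_K}) (i j : 'I_K) :
  w i * ((if (sigma j < sigma i)%N then 1 else 0) - (if (j < i)%N then 1 else 0))
  = (if (i < j)%N && (sigma j < sigma i)%N then w i else 0)
    - (if (j < i)%N && (sigma i < sigma j)%N then w i else 0).
Proof.
case: (eqVneq i j) => [->|nij]; first by rewrite !ltnn /= subrr mulr0.
have ns : (nat_of_ord (sigma i) != nat_of_ord (sigma j)).
  by apply: contra nij => /eqP /val_inj /perm_inj ->.
have nv : (nat_of_ord i != nat_of_ord j) by [].
case: (ltngtP i j) => h1; case: (ltngtP (sigma j) (sigma i)) => h2 /=;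
  rewrite ?subrr ?subr0 ?sub0r ?mulr0 ?mulr1 ?mulrN1 //.
all: first [ by move: ns; rewrite h2 eqxx | by move: nv; rewrite h1 eqxx ].
Qed.

Lemma dS_pairsum sigma : dS p S sigma = - ln p * pairsum sigma.
Proof.
rewrite /dS /pairsum.
transitivity (- ln p * \sum_(i in S) (w i * ((#|[set j in S | (sigma j < sigma i)%N]|)%:R
    - (#|[set j in S | (j < i)%N]|)%:R))).
  rewrite mulr_sumr; apply: eq_bigr => i iS.
  have ea : fOA p 1%g S i = C * p ^+ #|[set j in S | (j < i)%N]| by rewrite /fOA relpos1.
  have eb : fOA p sigma S i = C * p ^+ #|[set j in S | (sigma j < sigma i)%N]| by [].
  have Cn0 : C != 0 by exact: lt0r_neq0 C_gt0.
  rewrite /w ea eb invfM mulrACA (divff Cn0) mul1r.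
  have pa : p ^+ #|[set j in S | (j < i)%N]| \is Num.pos by rewrite posrE exprn_gt0.
  have pb : p ^+ #|[set j in S | (sigma j < sigma i)%N]| \is Num.pos by rewrite posrE exprn_gt0.
  rewrite (ln_div pa pb) !lnXn //.
  exact: alg.
congr (_ * _).
rewrite (eq_bigr (fun i : 'I_K => \sum_(j in S) ((if (i < j)%N && (sigma j < sigma i)%N then w i else 0)
    - (if (j < i)%N && (sigma i < sigma j)%N then w i else 0)))); last first.
  move=> i iS; rewrite !cardR -sumrB mulr_sumr; apply: eq_bigr => j jS; exact: pt.
rewrite [RHS](eq_bigr (fun i : 'I_K => \sum_(j in S) ((if (i < j)%N && (sigma j < sigma i)%N then w i else 0)
    - (if (i < j)%N && (sigma j < sigma i)%N then w j else 0)))); last first.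
  by move=> i iS; apply: eq_bigr => j jS; case: ifP; rewrite ?subr0.
under eq_bigr => i _ do rewrite sumrB.
under [RHS]eq_bigr => i _ do rewrite sumrB.
rewrite !sumrB; congr (_ - _).
by rewrite exchange_big.
Qed.

End Core.

Lemma swapAdjE K m (h : (m.+1 < K)%N) :
  swapAdj K m = tperm (Ordinal (ltnW h)) (Ordinal h).
Proof.
rewrite /swapAdj; case: ltnP => [h'|h']; last by move: (leq_trans h h'); rewrite ltnn.
by congr tperm; apply: val_inj.
Qed.

Lemma tv K m (h : (m.+1 < K)%N) (x : 'I_K) :
  nat_of_ord (tperm (Ordinal (ltnW h)) (Ordinal h) x) =
  if nat_of_ord x == m then m.+1 else if nat_of_ord x == m.+1 then m else nat_of_ord x.
Proof.
case: tpermP => [->|->|xa xb] /=; rewrite ?eqxx //.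
  by case: eqP => [e|//]; move: e; lia.
case: eqP => [e|_]; first by case: xa; apply: val_inj.
case: eqP => [e|_] //; by case: xb; apply: val_inj.
Qed.

Lemma inv_tperm K m (h : (m.+1 < K)%N) (i j : 'I_K) :
  (i < j)%N ->
  (tperm (Ordinal (ltnW h)) (Ordinal h) j < tperm (Ordinal (ltnW h)) (Ordinal h) i)%N ->
  i = Ordinal (ltnW h) /\ j = Ordinal h.
Proof.
move=> ij; rewrite !tv => hh; split; apply: val_inj => /=; move: hh ij;
  repeat (case: eqP => ?); lia.
Qed.

Lemma descent K (s : {perm 'I_K}) : s != 1%g ->
  exists (m : nat) (h : (m.+1 < K)%N), (s (Ordinal h) < s (Ordinal (ltnW h)))%N.
Proof.
move=> sn1; apply: Classical_Prop.NNPP => H.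
move/eqP: sn1; apply; apply/permP => i; rewrite perm1.
case: K s H i => [|K] s H i; first by case: i.
pose f n := nat_of_ord (s (@inord K n)).
have inc n : (n.+1 < K.+1)%N -> (f n < f n.+1)%N.
  move=> h.
  have e1 : Ordinal (ltnW h) = inord n by apply: val_inj; rewrite /= inordK // ltnW.
  have e2 : Ordinal h = inord n.+1 by apply: val_inj; rewrite /= inordK.
  have nl : ~ (s (Ordinal h) < s (Ordinal (ltnW h)))%N by move=> hl; apply: H; exists n, h.
  rewrite e1 e2 in nl; rewrite /f.
  have ne : nat_of_ord (s (@inord K n)) != nat_of_ord (s (@inord K n.+1)).
    apply/eqP => /val_inj /perm_inj /(congr1 (@nat_of_ord _)); rewrite !inordK //; [lia|exact: ltnW].
  move: nl ne; lia.
have up n : (n < K.+1)%N -> (n <= f n)%N.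
  elim: n => [//|n IH] hn; have := inc n hn; have := IH (ltnW hn); lia.
have down d : (d < K.+1)%N -> (f (K - d) <= K - d)%N.
  elim: d => [|d IH] hd; first by rewrite subn0 /f -ltnS.
  have h1 := inc (K - d.+1)%N ltac:(lia).
  have e : ((K - d.+1).+1 = K - d)%N by lia.
  rewrite e in h1; have := IH (ltnW hd); lia.
apply: val_inj => /=.
have := up i (ltn_ord i); have := down (K - i)%N ltac:(lia).
rewrite /f subKn; last by rewrite -ltnS.
rewrite inord_val; lia.
Qed.

Theorem mainTheorem10 (R : realType) (K : nat) (p : R) (sigma : {perm 'I_K}) :
  (2 <= K)%N -> 0 < p < 1 -> sigma != 1%g ->
  exists2 m : nat, (m.+1 < K)%N &
    forall S : {set 'I_K}, (2 <= #|S|)%N ->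
      dS p S (swapAdj K m) <= dS p S sigma.
Proof.
move=> K2 /andP[p0 p1] sn1.
have [m [h desc]] := descent _ _ sn1.
exists m => // S S2.
rewrite !(dS_pairsum _ _ _ _ p0 p1 S2) (swapAdjE _ _ h).
apply: ler_wpM2l; first by rewrite oppr_ge0 ln_le0 // ltW.
apply: ler_sum => i iS; apply: ler_sum => j jS.
case: ifP => [/andP[ij tji]|_].
  have [ei ej] := inv_tperm _ _ _ _ _ ij tji.
  by rewrite ifT // ei ej /= ltnSn desc.
case: ifP => // /andP[ij _]; rewrite subr_ge0; exact: (w_mono _ _ _ _ p0 p1 S2).
Qed.
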